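(* If $P$ is an $n\times n$ sign pattern all of whose entries are nonzero (i.e., $+$ or $-$) and $\mathcal{Q}(P)$ contains a nilpotent matrix, then $P$ is a spectrally arbitrary pattern.
   Context: A sign pattern is an array with entries in $\{+,-,0\}$; its qualitative class $\mathcal{Q}(P)$ is the set of real matrices of the same size whose entries have the signs prescribed by $P$. An $n\times n$ sign pattern $P$ is spectrally arbitrary if for every monic real polynomial $p$ of degree $n$ there is $A\in\mathcal{Q}(P)$ with characteristic polynomial $p$. *)

(* Defs.v *)
From HB Require Import structures.
From mathcomp Require Import all_boot all_order all_algebra.
From mathcomp Require Import all_classical all_reals.
Set Implicit Arguments. Unset Strict Implicit. Unset Printing Implicit Defensive.
Import Order.TTheory GRing.Theory Num.Theory.
Local Open Scope ring_scope.

Inductive sign := Pos | Neg | Zero.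

Definition has_sign (R : realType) (s : sign) (x : R) : Prop :=
  match s with Pos => 0 < x | Neg => x < 0 | Zero => x = 0 end.

Definition sign_pattern (n : nat) := 'I_n -> 'I_n -> sign.

Definition qual_class (R : realType) (n : nat) (P : sign_pattern n) (A : 'M[R]_n) : Prop :=
  forall i j, has_sign (P i j) (A i j).

Definition nowhere_zero (n : nat) (P : sign_pattern n) : Prop :=
  forall i j, P i j <> Zero.

Definition nilpotent_mx (R : realType) (n : nat) (A : 'M[R]_n) : Prop :=
  exists k : nat, A ^+ k = 0.

Definition spectrally_arbitrary (R : realType) (n : nat) (P : sign_pattern n) : Prop :=
  forall p : {poly R}, p \is monic -> size p = n.+1 ->
    exists A : 'M[R]_n, qual_class P A /\ char_poly A = p.

(* Main.v *)
Require Import Defs.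
From HB Require Import structures.
From mathcomp Require Import all_boot all_order all_algebra.
From mathcomp Require Import all_classical all_reals.
From mathcomp Require Import ring lra.
From mathcomp Require Import fingroup perm zify.
Import Order.TTheory GRing.Theory Num.Theory.
Local Open Scope ring_scope.
Set Implicit Arguments. Unset Strict Implicit.


Lemma posbound (R : realFieldType) (I : finType) (f : I -> R) :
  exists2 m : R, 0 < m & forall i, f i != 0 -> m < `|f i|.
Proof.
pose s := \sum_i `|f i|^-1.
have s0 : 0 <= s by apply: sumr_ge0 => i _; rewrite invr_ge0.
exists (1 + s)^-1; first by rewrite invr_gt0; lra.
move=> i fi0.
have fp : 0 < `|f i| by rewrite normr_gt0.
have le : `|f i|^-1 <= s.
  rewrite /s (bigD1 i) //= lerDl; apply: sumr_ge0 => j _; rewrite invr_ge0 //.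
have h1 : 0 < 1 + s by lra.
have e1 : (1 + s)^-1 * (1 + s) = 1 by rewrite mulVf // gt_eqF.
have e2 : `|f i|^-1 * `|f i| = 1 by rewrite mulVf // gt_eqF.
have p1 : 0 < (1 + s)^-1 by rewrite invr_gt0.
have p2 : 0 < `|f i|^-1 by rewrite invr_gt0.

rewrite -(ltr_pM2r h1) e1.
have e3 : 1 = `|f i| * `|f i|^-1 by rewrite mulfV // gt_eqF.
rewrite [X in X < _]e3 ltr_pM2l //; lra.
Qed.

Definition mxnorm (R : realFieldType) m n (M : 'M[R]_(m, n)) := \sum_i \sum_j `|M i j|.

Lemma mxnorm_ge0 (R : realFieldType) m n (M : 'M[R]_(m, n)) : 0 <= mxnorm M.
Proof. by apply: sumr_ge0 => i _; apply: sumr_ge0. Qed.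

Lemma mxnorm_entry (R : realFieldType) m n (M : 'M[R]_(m, n)) i j : `|M i j| <= mxnorm M.
Proof.
rewrite /mxnorm (bigD1 i) //= (bigD1 j) //= -addrA lerDl.
apply: addr_ge0; first by apply: sumr_ge0.
by apply: sumr_ge0 => k _; apply: sumr_ge0.
Qed.

Lemma rowsum_le (R : realFieldType) m n (M : 'M[R]_(m, n)) i : \sum_j `|M i j| <= mxnorm M.
Proof.
rewrite /mxnorm (bigD1 i) //= lerDl.
by apply: sumr_ge0 => k _; apply: sumr_ge0.
Qed.

Lemma mxnorm_mul (R : realFieldType) m n p (M : 'M[R]_(m, n)) (N : 'M[R]_(n, p)) :
  mxnorm (M *m N) <= mxnorm M * mxnorm N.
Proof.
rewrite /mxnorm mulr_suml; apply: ler_sum => i _.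
apply: (@le_trans _ _ (\sum_j \sum_k `|M i k| * `|N k j|)).
  apply: ler_sum => j _; rewrite mxE.
  apply: (le_trans (ler_norm_sum _ _ _)).
  by apply: ler_sum => k _; rewrite normrM.
rewrite exchange_big /= mulr_suml; apply: ler_sum => k _.
rewrite -mulr_sumr; apply: ler_wpM2l; first by [].
exact: rowsum_le.
Qed.

Lemma qual_scale (R : realType) n (P : sign_pattern n) (M : 'M[R]_n) a :
  0 < a -> qual_class P M -> qual_class P (a *: M).
Proof.
move=> a0 H i j; move: (H i j); rewrite mxE.
case: (P i j) => /=.
- by move=> h; rewrite mulr_gt0.
- by move=> h; nra.
- by move=> ->; rewrite mulr0.
Qed.

Lemma qual_open (R : realType) n (P : sign_pattern n) (X : 'M[R]_n) :
  nowhere_zero P -> qual_class P X ->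
  exists2 d : R, 0 < d & forall Z : 'M[R]_n,
    (forall i j, `|Z i j - X i j| < d) -> qual_class P Z.
Proof.
move=> nz qX.
have [d d0 Hd] := posbound (fun ij : 'I_n * 'I_n => X ij.1 ij.2).
exists d => // Z HZ i j.
have Xn0 : X i j != 0.
  by move: (qX i j) (nz i j); case: (P i j) => //= h _; [rewrite gt_eqF|rewrite lt_eqF].
have := Hd (i, j) Xn0; have := HZ i j; move: (qX i j) (nz i j) => /=.
have := ler_norm (Z i j - X i j); have := ler_norm (X i j - Z i j).
rewrite distrC.
case: (P i j) => //= h1 h2 h _.
- rewrite (gtr0_norm h); lra.
- rewrite (ltr0_norm h); lra.
Qed.


Lemma char_poly_conj (F : fieldType) n (S S' M : 'M[F]_n) :
  S' *m S = 1%:M -> char_poly (S *m M *m S') = char_poly M.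
Proof.
move=> h; have h' := mulmx1C h.
rewrite /char_poly /char_poly_mx.
have e : 'X%:M - map_mx polyC (S *m M *m S') =
   map_mx polyC S *m ('X%:M - map_mx polyC M) *m map_mx polyC S'.
  rewrite mulmxBr mulmxBl !map_mxM scalar_mxC -mulmxA.
  rewrite -[in RHS]mulmxA -(map_mxM _ S S') h' map_mx1 mulmx1.
  by rewrite !mulmxA.
rewrite e !det_mulmx mulrC mulrA -det_mulmx -map_mxM h map_mx1 det1 mul1r.
by [].
Qed.

Definition Cn (F : fieldType) n (p : {poly F}) : 'M[F]_n :=
  \matrix_(i < n, j < n) if i == n.-1 :> nat then - p`_j else (i.+1 == j)%:R.

Lemma CnK (F : fieldType) n (p : {poly F}) :
  p \is monic -> size p = n.+1 -> char_poly (Cn n p) = p.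
Proof.
move=> pm sp.
suff H : forall m, m = (size p).-1 -> char_poly (Cn m p) = p by apply: H; rewrite sp.
move=> m ->; rewrite -[RHS](companionmxK pm); congr char_poly.
Qed.


Lemma Gpow (F : fieldType) n (G : 'M[F]_n.+1) :
  (forall i j : 'I_n.+1, (j <= i)%N -> G i j = 0) ->
  (forall i j : 'I_n.+1, i.+1 = j -> G i j != 0) ->
  forall m, (forall j : 'I_n.+1, (j < m)%N -> (G ^+ m) ord0 j = 0) /\
            (forall j : 'I_n.+1, val j = m -> (G ^+ m) ord0 j != 0).
Proof.
move=> Gup Gsd; elim=> [|m [IH1 IH2]].
  split=> [j //|j /= j0].
  have -> : j = ord0 by apply/val_inj.
  by rewrite expr0 mxE eqxx oner_eq0.
split=> j hj; rewrite exprSr -mulmxE mxE.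
  apply: big1 => c _.
  case: (ltnP c m) => hc; first by rewrite IH1 // mul0r.
  by rewrite Gup ?mulr0 //; apply: leq_trans hc; rewrite -ltnS.
have hm : (m < n.+1)%N by rewrite -hj (leq_trans _ (ltn_ord j)).
rewrite (bigD1 (Ordinal hm)) //= big1 ?addr0.
  by rewrite mulf_neq0 // ?IH2 // Gsd // hj.
move=> c hc.
have hc' : val c != m by apply: contra hc => /eqP e; apply/eqP/val_inj.
case: (ltnP c m) => hcm; first by rewrite IH1 // mul0r.
rewrite Gup ?mulr0 // hj.
by rewrite ltn_neqAle eq_sym hc' hcm.
Qed.

Definition Jm {F : fieldType} n : 'M[F]_n := \matrix_(i < n, j < n) (i.+1 == j)%:R.

Lemma krylov (F : fieldType) n (G : 'M[F]_n.+1) :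
  (forall i j : 'I_n.+1, (j <= i)%N -> G i j = 0) ->
  (forall i j : 'I_n.+1, i.+1 = j -> G i j != 0) ->
  exists X : 'M[F]_n.+1, X \in unitmx /\ X *m G = Jm n.+1 *m X.
Proof.
move=> Gup Gsd; have GP := Gpow Gup Gsd.
pose X : 'M[F]_n.+1 := \matrix_(i, j) (G ^+ i) ord0 j.
exists X; split.
  rewrite unitmxE unitfE -det_tr det_trig.
    apply/prodf_neq0 => i _; rewrite !mxE; exact: (GP i).2.
  apply/is_trig_mxP => i j hij; rewrite !mxE; exact: (GP j).1.
apply/matrixP => i j.
have -> : (X *m G) i j = (G ^+ i.+1) ord0 j.
  by rewrite exprSr -mulmxE !mxE; apply: eq_bigr => c _; rewrite mxE.
rewrite mxE.
case: (ltnP i.+1 n.+1) => hi.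
  rewrite (bigD1 (Ordinal hi)) //= big1 ?addr0.
    by rewrite !mxE eqxx mul1r.
  move=> c hc; rewrite !mxE.
  have -> : (i.+1 == c) = false.
    by apply/negbTE; apply: contra hc => /eqP e; apply/eqP/val_inj.
  by rewrite mul0r.
rewrite (GP _).1; last by apply: leq_trans (ltn_ord j) hi.
symmetry; apply: big1 => c _; rewrite !mxE.
have -> : (i.+1 == c) = false.
  by apply/negbTE; rewrite neq_ltn; apply/orP; right; apply: leq_trans (ltn_ord c) hi.
by rewrite mul0r.
Qed.


Lemma det_expr (F : fieldType) n (A : 'M[F]_n) k : \det (A ^+ k) = \det A ^+ k.
Proof.
elim: k => [|k IH]; first by rewrite !expr0 det1.
by rewrite !exprS -mulmxE det_mulmx IH.
Qed.

Lemma conj_expr (F : fieldType) n (A W Wi : 'M[F]_n) k :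
  W *m Wi = 1%:M -> (Wi *m A *m W) ^+ k = Wi *m A ^+ k *m W.
Proof.
move=> h; elim: k => [|k IH].
  by rewrite !expr0 mulmx1 mulmx1C.
rewrite !exprS -!mulmxE IH !mulmxA -[Wi *m A *m W *m Wi]mulmxA h mulmx1.
by [].
Qed.

Lemma blk_pow (F : fieldType) n (a : 'M[F]_1) (b : 'M[F]_(1, n)) (d : 'M[F]_n) k :
  exists x, (block_mx a b 0 d : 'M_(1 + n)) ^+ k = block_mx (a ^+ k) x 0 (d ^+ k).
Proof.
elim: k => [|k [x IH]].
  by exists 0; rewrite !expr0; exact: (scalar_mx_block 1 n 1).
exists (a ^+ k *m b + x *m d).
rewrite !exprSr -!mulmxE IH mulmx_block !mulmx0 !mul0mx !addr0 !add0r.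
by [].
Qed.

Lemma complete_col (F : fieldType) n (v : 'rV[F]_n.+1) : v != 0 ->
  exists2 W : 'M[F]_n.+1, W \in unitmx & forall i, W i ord0 = v ord0 i.
Proof.
move=> v0.
have [r hr] : exists r, v ord0 r != 0.
  case: (pickP (fun r => v ord0 r != 0)) => [r hr|h]; first by exists r.
  case/negP: v0; apply/eqP/rowP => j; rewrite mxE.
  by have := h j => /negbFE/eqP; rewrite (ord1 ord0).
pose W0 : 'M[F]_n.+1 := \matrix_(i, j) if j == r then v ord0 i else (i == j)%:R.
have cof1 : forall i j, cofactor (1%:M : 'M[F]_n.+1) i j = (i == j)%:R.
  move=> i j; have := congr1 (fun M : 'M[F]_n.+1 => M j i) (adj1 F n.+1).
  by rewrite /= !mxE eq_sym.
have cofW : forall i, cofactor W0 i r = cofactor 1%:M i r.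
  move=> i; rewrite /cofactor; congr (_ * \det _); apply/matrixP => k j.
  by rewrite !mxE eq_sym (negbTE (neq_lift _ _)).
have dW0 : \det W0 = v ord0 r.
  rewrite (expand_det_col _ r) (bigD1 r) //= big1 ?addr0.
    by rewrite !mxE eqxx cofW cof1 eqxx mulr1.
  by move=> i hi; rewrite cofW cof1 (negbTE hi) mulr0.
exists (W0 *m tperm_mx ord0 r).
  by rewrite unitmx_mul unitmx_perm andbT unitmxE unitfE dW0.
move=> i; rewrite -xcolE mxE tpermL mxE eqxx.
by [].
Qed.

Lemma blk_inv (F : fieldType) n (S T : 'M[F]_n) : S *m T = 1%:M ->
  (block_mx (1 : 'M_1) 0 0 S : 'M_(1 + n)) *m block_mx 1 0 0 T = 1%:M.
Proof.
move=> h; rewrite mulmx_block !mulmx0 !mul0mx !addr0 !add0r mulmx1 h.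
by rewrite -scalar_mx_block.
Qed.

Lemma blk_conj (F : fieldType) n (u : 'M[F]_(1, n)) (A' S T : 'M[F]_n) :
  (block_mx (1 : 'M_1) 0 0 S : 'M_(1 + n)) *m block_mx (0 : 'M_1) u (0 : 'M_(n, 1)) A' *m block_mx 1 0 0 T
  = block_mx 0 (u *m T) 0 (S *m A' *m T).
Proof.
rewrite !mulmx_block !mulmx0 !mul0mx !addr0 !add0r !mul1mx !mulmx1.
by [].
Qed.

Lemma nil_trig (F : fieldType) n (A : 'M[F]_n) k : A ^+ k = 0 ->
  exists S T : 'M[F]_n, [/\ S *m T = 1%:M, T *m S = 1%:M &
    forall i j : 'I_n, (j <= i)%N -> (S *m A *m T) i j = 0].
Proof.
elim: n A k => [|n IH] A k hA.
  by exists 1%:M, 1%:M; split; rewrite ?mulmx1 // => -[].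
move: A hA; rewrite -[n.+1]/(1 + n)%N => A hA.
have detA : \det A = 0.
  have hk : (\det A) ^+ k = 0 by rewrite -det_expr hA det0.
  case: k hA hk => [|k] hA hk; last by move/eqP: hk; rewrite expf_eq0 => /andP[_ /eqP].
  by move: hA; rewrite expr0 => /matrixP/(_ ord0 ord0); rewrite !mxE eqxx => /eqP; rewrite oner_eq0.
have [v v0 vA] : exists2 v : 'rV[F]_n.+1, v != 0 & v *m A^T = 0.
  by apply/det0P; rewrite det_tr detA.
have Av : A *m v^T = 0 by rewrite -[A]trmxK -trmx_mul vA trmx0.
have [W Wu Wc] := complete_col v0.
set Wi := invmx W.
have WWi : W *m Wi = 1%:M by rewrite mulmxV.
have WiW : Wi *m W = 1%:M by rewrite mulVmx.
set B := Wi *m A *m W.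
have Bc : forall i, B i ord0 = 0.
  have e : W *m (delta_mx ord0 ord0 : 'M_(n.+1, 1)) = v^T.
    apply/matrixP => i j; rewrite (ord1 j) !mxE (bigD1 ord0) //= big1 ?addr0.
      by rewrite !mxE !eqxx mulr1 Wc.
    by move=> c hc; rewrite !mxE (negbTE hc) mulr0.
  have : A *m W *m (delta_mx ord0 ord0 : 'M_(n.+1, 1)) = 0.

    by rewrite -mulmxA e Av.
  move=> h i.
  have := congr1 (fun M => (Wi *m M) i ord0) h.
  rewrite mulmx0 !mulmxA -/B [RHS]mxE => <-.
  rewrite [RHS]mxE (bigD1 ord0) //= big1 ?addr0.
    by rewrite [delta_mx _ _ _ _]mxE !eqxx mulr1.
  by move=> c hc; rewrite [delta_mx _ _ _ _]mxE (negbTE hc) mulr0.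
have Bk : B ^+ k = 0 by rewrite /B conj_expr // hA mulmx0 mul0mx.
have BE : Wi *m A *m W = B by [].
clearbody B.
pose B' : 'M[F]_(1 + n) := B.
have l0 : forall j : 'I_1, lshift n j = ord0 :> 'I_n.+1.
  by move=> j; apply/val_inj; rewrite /= (ord1 j).
have Bblk : B' = block_mx 0 (ursubmx B') 0 (drsubmx B').
  rewrite -[B' in LHS]submxK; congr block_mx.
    by apply/matrixP => i j; rewrite !mxE !l0; apply: Bc.
  by apply/matrixP => i j; rewrite !mxE l0; apply: Bc.
set A' := drsubmx B'.
have A'k : A' ^+ k = 0.
  have [x hx] := blk_pow 0 (ursubmx B') A' k.
  rewrite -Bblk in hx.
  have := congr1 drsubmx hx; rewrite block_mxKdr => <-.
  by rewrite /B' Bk; apply/matrixP => i j; rewrite !mxE.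
have [S' [T' [h1 h2 htri]]] := IH A' k A'k.
exists ((block_mx (1 : 'M_1) 0 0 S' : 'M_(1 + n)) *m Wi), (W *m (block_mx (1 : 'M_1) 0 0 T' : 'M_(1 + n))).
split.
- rewrite -mulmxA [Wi *m _]mulmxA WiW mul1mx.
  rewrite mulmx_block.
  rewrite !mulmx0 !mul0mx !addr0 !add0r mulmx1 h1.
  by rewrite -scalar_mx_block.
- rewrite !mulmxA -[W *m _ *m _]mulmxA (blk_inv h2) mulmx1.
  by [].
- rewrite !mulmxA -(mulmxA _ Wi A) -(mulmxA _ (Wi *m A) W) BE.
  have -> : B = B' by [].
  rewrite Bblk (blk_conj (ursubmx B') A' S' T').
  move=> i j; rewrite -[i]splitK -[j]splitK.
  case: (fintype.split i) => i'; case: (fintype.split j) => j' /=.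
  + by rewrite block_mxEul mxE.
  + by rewrite (ord1 i') /=.
  + by rewrite block_mxEdl mxE.
  + by rewrite block_mxEdr leq_add2l => /htri.
Qed.


Lemma small (R : realFieldType) (a b K : R) : 0 < a -> 0 < b -> 0 <= K ->
  exists t, [/\ 0 < t, t < a & t * K < b].
Proof.
move=> a0 b0 K0.
pose D := (a + b) * (1 + K).
have D0 : 0 < D by rewrite /D mulr_gt0 //; lra.
exists (a * b / D).
have e : a * b / D * D = a * b by rewrite mulfVK // gt_eqF.
set t := a * b / D in e *.
have t0 : 0 < t by rewrite /t mulr_gt0 ?invr_gt0 // mulr_gt0.
have hD : D = a + b + a * K + b * K by rewrite /D; ring.
split => //.
- have : 0 < (a - t) * D.
    have -> : (a - t) * D = a * (a + a * K + b * K) by rewrite mulrBl e hD; ring.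
    by rewrite mulr_gt0 //; nra.
  by rewrite (pmulr_lgt0 _ D0) subr_gt0.
- have e2 : t * K * D = a * b * K by rewrite -e; ring.
  have : 0 < (b - t * K) * D.
    have -> : (b - t * K) * D = b * (a + b + b * K) by rewrite mulrBl e2 hD; ring.
    by rewrite mulr_gt0 //; nra.
  by rewrite (pmulr_lgt0 _ D0) subr_gt0.
Qed.

Definition dg {R : realFieldType} n (e : R) : 'M[R]_n := diag_mx (\row_(i < n) e ^+ i).
Definition dgi {R : realFieldType} n (e : R) : 'M[R]_n := diag_mx (\row_(i < n) (e ^+ i)^-1).

Lemma dg_inv (R : realFieldType) n (e : R) : e != 0 -> dgi n e *m dg n e = 1%:M.
Proof.
move=> e0; rewrite mul_diag_mx; apply/matrixP => i j; rewrite !mxE.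
case: eqVneq => [->|hij]; last by rewrite mulr0n mulr0.
by rewrite mulr1n mulVf // expf_neq0.
Qed.

Lemma Eentry (R : realFieldType) n (p : {poly R}) (e : R) (i j : 'I_n) :
  0 < e -> e <= 1 ->
  `|(e *: (dg n e *m Cn n p *m dgi n e) - Jm n) i j| <= e * `|p`_j|.
Proof.
move=> e0 e1.
rewrite mul_diag_mx mul_mx_diag !mxE.
case: eqVneq => [hi|hi].
  have hJ : (i.+1 == j) = false.
    by apply/negbTE/eqP; have := ltn_ord j; have := ltn_ord i; lia.
  have hij : (j <= i)%N by have := ltn_ord j; have := ltn_ord i; lia.
  rewrite hJ subr0.
  have ee : e ^+ i = e ^+ (i - j) * e ^+ j by rewrite -exprD subnK.
  rewrite ee.
  have ej : e ^+ j != 0 by rewrite expf_neq0 // gt_eqF.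
  have -> : e * (e ^+ (i - j) * e ^+ j * - p`_j / e ^+ j) = - (e * e ^+ (i - j) * p`_j).
    by field.
  rewrite normrN.
  rewrite normrM normrM (ger0_norm (ltW e0)) -mulrA ler_wpM2l ?(ltW e0) //.
  rewrite ger0_norm ?exprn_ge0 ?(ltW e0) //.
  rewrite -[X in _ <= X]mul1r ler_wpM2r //.
  by apply: exprn_ile1 => //; rewrite ltW.
case: eqVneq => [hij|hij].
  have ee : e ^+ j = e ^+ i * e by rewrite -hij exprSr.
  have ei : e ^+ i != 0 by rewrite expf_neq0 // gt_eqF.
  rewrite ee mulr1 (_ : e * (e ^+ i * (e ^+ i * e)^-1) = 1); last by field; rewrite gt_eqF.
  by rewrite subrr normr0 mulr_ge0 ?(ltW e0).
by rewrite mulr0 mul0r mulr0 subrr normr0 mulr_ge0 ?(ltW e0).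
Qed.

Unset Implicit Arguments.

Theorem corollary5p7 (R : realType) (n : nat) (P : sign_pattern n) :
  nowhere_zero P ->
  (exists A : 'M[R]_n, qual_class P A /\ nilpotent_mx A) ->
  spectrally_arbitrary R P.
Proof.
move=> nz [A [qA [k hA]]] p pm sp.
case: n P nz A qA hA sp => [|n] P nz A qA hA sp.
  by exists (Cn 0 p); split; [move=> [] | exact: CnK].
have [d dp Hd] := qual_open nz qA.
have [S [T [ST TS Ttri]]] := nil_trig hA.
set U := S *m A *m T.
have AU : A = T *m U *m S.
  by rewrite /U !mulmxA TS mul1mx -mulmxA TS mulmx1.
have Utri : forall i j : 'I_n.+1, (j <= i)%N -> U i j = 0 by [].
clearbody U.
set M1 := T *m Jm n.+1 *m S.
have [m0 m0p Hm0] := posbound (fun ij : 'I_n.+1 * 'I_n.+1 => U ij.1 ij.2).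
have [t [t0 tm tK]] := small m0p dp (mxnorm_ge0 M1).
set G := U + t *: Jm n.+1.
have Gup : forall i j : 'I_n.+1, (j <= i)%N -> G i j = 0.
  move=> i j hij; rewrite !mxE Utri // (_ : (i.+1 == j) = false) ?mulr0 ?addr0 //.
  by apply/negbTE; rewrite neq_ltn ltnS hij orbT.
have Gsd : forall i j : 'I_n.+1, i.+1 = j -> G i j != 0.
  move=> i j hij; rewrite !mxE hij eqxx mulr1.
  case: (eqVneq (U i j) 0) => [->|hU]; first by rewrite add0r gt_eqF.
  have /= h := Hm0 (i, j) hU.
  apply/negP; rewrite addr_eq0 => /eqP eU.
  by move: h; rewrite eU normrN gtr0_norm //; lra.
have [X [Xu XG]] := krylov Gup Gsd.
set Xi := invmx X.
have XXi : X *m Xi = 1%:M by rewrite mulmxV.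
have XiX : Xi *m X = 1%:M by rewrite mulVmx.
have GE : G = Xi *m Jm n.+1 *m X by rewrite -mulmxA -XG mulmxA XiX mul1mx.
set N := T *m G *m S.
have NA : N = A + t *: M1.
  by rewrite /N /G mulmxDr mulmxDl -AU -scalemxAr -scalemxAl.
clearbody M1.
have qN : qual_class P N.
  apply: Hd => i j; rewrite NA !mxE addrAC subrr add0r normrM gtr0_norm //.
  have : t * `|M1 i j| <= t * mxnorm M1 by rewrite ler_pM2l //; apply: mxnorm_entry.
  move=> h; lra.
set Q' := T *m Xi.
set Q := X *m S.
have NQ : N = Q' *m Jm n.+1 *m Q by rewrite /N GE /Q' /Q !mulmxA.
have QQ' : Q *m Q' = 1%:M.
  by rewrite /Q /Q' -mulmxA (mulmxA S) ST mul1mx XXi.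
have Q'Q : Q' *m Q = 1%:M.
  by rewrite /Q /Q' -mulmxA (mulmxA Xi) XiX mul1mx TS.
have [d2 d2p Hd2] := qual_open nz qN.
set c := \sum_(i < n.+1) \sum_(j < n.+1) `|p`_j|.
have c0 : 0 <= c by apply: sumr_ge0 => i _; apply: sumr_ge0.
set K2 := mxnorm Q' * mxnorm Q.
have K20 : 0 <= K2 by rewrite mulr_ge0 ?mxnorm_ge0.
have [e [e0 e1 eK]] := small (@ltr01 R) d2p (mulr_ge0 K20 c0).
set C := Cn n.+1 p.
set Y := dg n.+1 e *m C *m dgi n.+1 e.
set E := e *: Y - Jm n.+1.
have EN : mxnorm E <= e * c.
  rewrite /mxnorm /c mulr_sumr; apply: ler_sum => i _.
  rewrite mulr_sumr; apply: ler_sum => j _.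
  by apply: Eentry => //; rewrite ltW.
exists (Q' *m Y *m Q); split; last first.
  by rewrite char_poly_conj // char_poly_conj ?dg_inv ?gt_eqF // CnK.
set Bf := Q' *m Y *m Q.
have eq : e *: Bf - N = Q' *m E *m Q.
  by rewrite /Bf NQ /E mulmxBr mulmxBl -scalemxAr -scalemxAl.
have -> : Bf = e^-1 *: (e *: Bf) by rewrite scalerA mulVf ?gt_eqF // scale1r.
apply: qual_scale; first by rewrite invr_gt0.
apply: Hd2 => i j.
have h : `|(e *: Bf - N) i j| < d2.
  apply: le_lt_trans (mxnorm_entry _ i j) _.
  rewrite eq; apply: le_lt_trans (mxnorm_mul _ _) _.
  apply: le_lt_trans (ler_wpM2r (mxnorm_ge0 Q) (mxnorm_mul Q' E)) _.
  apply: (le_lt_trans _ eK).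
  have h1 : mxnorm Q' * mxnorm E <= mxnorm Q' * (e * c).
    by apply: ler_wpM2l; [apply: mxnorm_ge0|].
  have h2 := ler_wpM2r (mxnorm_ge0 Q) h1.
  apply: le_trans h2 _.
  by rewrite /K2 le_eqVlt; apply/orP; left; apply/eqP; ring.
clearbody Bf N.
by move: h; rewrite !mxE.
Qed.
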